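(* Let $A\in\mathrm{Sym}(\mathbb R^{n+1})$ with $\vec a_0\ne 0$, and let $B=I_n+\sqrt{-1}A$ (which is invertible). Then $\mathrm{Re}(B^{-1})$ is positive semidefinite with exactly one zero eigenvalue, and its null space is spanned by the first column $(a_{00},a_{01},\dots,a_{0n})^T$ of $A$.
   Context: $I_n=\mathrm{diag}(0,1,\dots,1)\in\mathrm{Sym}(\mathbb R^{n+1})$. For $A=[a_{ij}]_{i,j=0}^n$, $\vec a_0=(a_{01},\dots,a_{0n})$. For a complex matrix $M$, $\mathrm{Re}\,M$ denotes the entrywise real part. *)

(* Defs.v *)
(* Complex numbers: an arbitrary numClosedFieldType C
   (e.g. algC); real numbers are its elements x with x \is Num.real. *)
From HB Require Import structures.
From mathcomp Require Import all_boot all_order all_algebra.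
Set Implicit Arguments. Unset Strict Implicit. Unset Printing Implicit Defensive.
Import Order.TTheory GRing.Theory Num.Theory.
Local Open Scope ring_scope.

Notation realmx := (mxOver Num.real).

(* I_n = diag(0,1,...,1) of size n+1 *)
Definition Imx0 (C : numClosedFieldType) (n : nat) : 'M[C]_(n.+1) :=
  \matrix_(i, j) (((i == j) && (i != ord0))%:R).

Definition Remx (C : numClosedFieldType) m n (M : 'M[C]_(m, n)) : 'M[C]_(m, n) :=
  map_mx (fun z : C => 'Re z) M.

Definition avec0 (C : numClosedFieldType) (n : nat) (A : 'M[C]_(n.+1)) : 'rV[C]_n :=
  \row_(j < n) A ord0 (lift ord0 j).

Definition psd (C : numClosedFieldType) (n : nat) (M : 'M[C]_n) : Prop :=
  forall x : 'cV[C]_n, x \is a realmx -> 0 <= (x^T *m M *m x) 0 0.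

(* Main.v *)
Require Import Defs.
From HB Require Import structures.
From mathcomp Require Import all_boot all_order all_algebra.
From mathcomp Require Import sesquilinear spectral.
Import Order.TTheory GRing.Theory Num.Theory.
Local Open Scope ring_scope.

Lemma Imx0E (C : numClosedFieldType) n :
  Imx0 C n = 1%:M - delta_mx ord0 ord0.
Proof.
apply/matrixP=> i j; rewrite !mxE.
case: (i =P ord0) => [->|/eqP i0]; case: (j =P ord0) => [->|/eqP j0];
  rewrite /= ?eqxx ?andbF ?andbT ?subrr ?subr0 //.
  by rewrite eq_sym (negPf j0).
Qed.

Lemma Imx0_tr (C : numClosedFieldType) n : (Imx0 C n)^T = Imx0 C n.
Proof. by rewrite Imx0E linearB /= trmx1 trmx_delta. Qed.

Lemma Imx0_idem (C : numClosedFieldType) n : Imx0 C n *m Imx0 C n = Imx0 C n.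
Proof.
rewrite Imx0E mulmxBl !mulmxBr !mul1mx mulmx1 mul_delta_mx.
by rewrite subrr subr0.
Qed.

Lemma Imx0_real (C : numClosedFieldType) n : Imx0 C n \is a realmx.
Proof. by apply/mxOverP=> i j; rewrite mxE realn. Qed.


Lemma sos_sum (C : numClosedFieldType) m (u : 'cV[C]_m) :
  (u^T *m u) 0 0 = \sum_k u k 0 ^+ 2.
Proof. by rewrite !mxE; apply: eq_bigr => k _; rewrite !mxE expr2. Qed.

Lemma sos_ge0 (C : numClosedFieldType) m (u : 'cV[C]_m) :
  u \is a realmx -> 0 <= (u^T *m u) 0 0.
Proof.
move=> /mxOverP ur; rewrite sos_sum sumr_ge0 // => k _.
by rewrite -realEsqr ur.
Qed.

Lemma sos_eq0 (C : numClosedFieldType) m (u : 'cV[C]_m) :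
  u \is a realmx -> (u^T *m u) 0 0 = 0 -> u = 0.
Proof.
move=> /mxOverP ur; rewrite sos_sum => /psumr_eq0P h.
apply/matrixP=> i j; rewrite ord1 mxE.
have : u i 0 ^+ 2 = 0 by apply: h => // k _; rewrite -realEsqr ur.
by move=> /eqP; rewrite sqrf_eq0 => /eqP.
Qed.

Lemma qfI0 (C : numClosedFieldType) n (z : 'cV[C]_n.+1) :
  z^T *m Imx0 C n *m z = (Imx0 C n *m z)^T *m (Imx0 C n *m z).
Proof.
by rewrite trmx_mul Imx0_tr -!mulmxA [Imx0 C n *m (_ *m z)]mulmxA Imx0_idem.
Qed.

Lemma realmxM (C : numClosedFieldType) p q r (X : 'M[C]_(p, q)) (Y : 'M[C]_(q, r)) :
  X \is a realmx -> Y \is a realmx -> X *m Y \is a realmx.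
Proof. exact: mxOverM. Qed.

Lemma realmx_tr (C : numClosedFieldType) p q (X : 'M[C]_(p, q)) :
  X \is a realmx -> X^T \is a realmx.
Proof. by move=> /mxOverP h; apply/mxOverP=> i j; rewrite mxE h. Qed.

Lemma qf_ge0 (C : numClosedFieldType) n (z : 'cV[C]_n.+1) :
  z \is a realmx -> 0 <= (z^T *m Imx0 C n *m z) 0 0.
Proof. by move=> zr; rewrite qfI0 sos_ge0 // realmxM // Imx0_real. Qed.

Lemma qf_eq0 (C : numClosedFieldType) n (z : 'cV[C]_n.+1) :
  z \is a realmx -> (z^T *m Imx0 C n *m z) 0 0 = 0 -> Imx0 C n *m z = 0.
Proof. by move=> zr; rewrite qfI0 => /sos_eq0; apply; rewrite realmxM // Imx0_real. Qed.

Lemma deltaz (C : numClosedFieldType) n (z : 'cV[C]_n.+1) :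
  (delta_mx ord0 ord0 : 'M_n.+1) *m z = z ord0 0 *: delta_mx ord0 (0 : 'I_1).
Proof.
apply/matrixP=> i j; rewrite ord1 !mxE (bigD1 ord0) //= big1 => [|k kn0].
  by rewrite !mxE eqxx andbT addr0; case: (i == ord0); rewrite ?mul1r ?mulr1 ?mul0r ?mulr0.
by rewrite !mxE (negPf kn0) andbF mul0r.
Qed.

Lemma I0z0 (C : numClosedFieldType) n (z : 'cV[C]_n.+1) :
  Imx0 C n *m z = 0 -> z = z ord0 0 *: delta_mx ord0 (0 : 'I_1).
Proof.
rewrite Imx0E mulmxBl mul1mx deltaz => /eqP; rewrite subr_eq0 => /eqP.
by [].
Qed.

Lemma I0zA (C : numClosedFieldType) n (A : 'M[C]_n.+1) (z : 'cV[C]_n.+1) :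
  Imx0 C n *m z = 0 -> A *m z = z ord0 0 *: col ord0 A.
Proof. by move=> h; rewrite {1}(I0z0 _ _ _ h) -scalemxAr colE. Qed.

Lemma I0z_kill (C : numClosedFieldType) n (A : 'M[C]_n.+1) (z : 'cV[C]_n.+1) :
  col ord0 A != 0 -> Imx0 C n *m z = 0 -> A *m z = 0 -> z = 0.
Proof.
move=> a0 hI hA; have := I0zA _ _ A _ hI; rewrite hA => /esym/eqP.
rewrite scaler_eq0 (negPf a0) orbF => /eqP z0.
by rewrite (I0z0 _ _ _ hI) z0 scale0r.
Qed.

Lemma cplx_mul (C : numClosedFieldType) p q r (X1 Y1 : 'M[C]_(p, q)) (X2 Y2 : 'M[C]_(q, r)) :
  (X1 + 'i *: Y1) *m (X2 + 'i *: Y2) =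
  (X1 *m X2 - Y1 *m Y2) + 'i *: (X1 *m Y2 + Y1 *m X2).
Proof.
rewrite mulmxDl !mulmxDr -!scalemxAl -!scalemxAr scalerA -expr2 sqrCi scaleN1r.
by rewrite scalerDr [_ - Y1 *m Y2]addrC addrACA.
Qed.

Lemma cplx_dec (C : numClosedFieldType) p q (W : 'M[C]_(p, q)) :
  W = map_mx (fun z => 'Re z) W + 'i *: map_mx (fun z => 'Im z) W.
Proof. by apply/matrixP=> i j; rewrite !mxE -Crect. Qed.

Lemma realmx_Re (C : numClosedFieldType) p q (W : 'M[C]_(p, q)) :
  map_mx (fun z => 'Re z) W \is a realmx.
Proof. by apply/mxOverP=> i j; rewrite mxE Creal_Re. Qed.

Lemma realmx_Im (C : numClosedFieldType) p q (W : 'M[C]_(p, q)) :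
  map_mx (fun z => 'Im z) W \is a realmx.
Proof. by apply/mxOverP=> i j; rewrite mxE Creal_Im. Qed.

Lemma cplx_eq (C : numClosedFieldType) p q (X Y X' Y' : 'M[C]_(p, q)) :
  X \is a realmx -> Y \is a realmx -> X' \is a realmx -> Y' \is a realmx ->
  X + 'i *: Y = X' + 'i *: Y' -> X = X' /\ Y = Y'.
Proof. by move=> Xr Yr X'r Y'r h; case: (eqmx_ReiIm Xr Yr X'r Y'r h) => -> ->. Qed.

Lemma cplx_eq0 (C : numClosedFieldType) p q (X Y : 'M[C]_(p, q)) :
  X \is a realmx -> Y \is a realmx -> X + 'i *: Y = 0 -> X = 0 /\ Y = 0.
Proof.
move=> Xr Yr h; apply: cplx_eq => //; try by apply: mxOver0; rewrite rpred0.
by rewrite scaler0 addr0.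
Qed.

Lemma realmxB (C : numClosedFieldType) p q (X Y : 'M[C]_(p, q)) :
  X \is a realmx -> Y \is a realmx -> X - Y \is a realmx.
Proof. by move=> /mxOverP h1 /mxOverP h2; apply/mxOverP=> i j; rewrite !mxE rpredB. Qed.

Lemma realmxD' (C : numClosedFieldType) p q (X Y : 'M[C]_(p, q)) :
  X \is a realmx -> Y \is a realmx -> X + Y \is a realmx.
Proof. by move=> /mxOverP h1 /mxOverP h2; apply/mxOverP=> i j; rewrite !mxE rpredD. Qed.

Lemma scal11 (C : numClosedFieldType) (X : 'M[C]_1) : (X^T) 0 0 = X 0 0.
Proof. by rewrite mxE. Qed.

Lemma char_poly_conj (R : fieldType) n (S D : 'M[R]_n) :
  S \in unitmx -> char_poly (invmx S *m D *m S) = char_poly D.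
Proof.
move=> Su; rewrite /char_poly /char_poly_mx.
set f := map_mx (@polyC R).
have fK : f (invmx S) *m f S = 1%:M by rewrite -map_mxM mulVmx // map_mx1.
have E : 'X%:M - f (invmx S *m D *m S) = f (invmx S) *m ('X%:M - f D) *m f S.
  rewrite mulmxBr mulmxBl -[f (invmx S) *m 'X%:M *m f S]mulmxA -scalar_mxC mulmxA fK mul1mx.
  by rewrite /f !map_mxM.
by rewrite E !det_mulmx mulrAC -det_mulmx fK det1 mul1r.
Qed.

Theorem lemma4p3 (C : numClosedFieldType) (n : nat) (A : 'M[C]_(n.+1))
  (hAreal : A \is a realmx) (hAsym : A^T = A) (ha0 : avec0 A != 0) :
  let B := Imx0 C n + 'i *: A in
  let M := Remx (invmx B) in
  [/\ B \in unitmx,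
      psd M,
      mup 0 (char_poly M) = 1%N
    & forall v : 'cV[C]_(n.+1), v \is a realmx ->
        (M *m v = 0 <-> exists2 c : C, c \is Num.real & v = c *: col ord0 A)].
Proof.
move=> B M.
set I0 := Imx0 C n.
set a := col ord0 A.
have I0r : I0 \is a realmx by apply: Imx0_real.
have a0 : a != 0.
  apply: contra_neq ha0 => h; apply/rowP => j; rewrite !mxE.
  have := congr1 (fun X : 'cV_n.+1 => X (lift ord0 j) 0) h.
  by rewrite !mxE -{1}hAsym mxE.
have ar : a \is a realmx by apply/mxOverP=> i j; rewrite mxE (mxOverP hAreal).
have Bsym : B^T = B by rewrite /B linearD /= Imx0_tr linearZ /= hAsym.
have Bu : B \in unitmx.
  rewrite -row_free_unit -kermx_eq0; apply/negP => /negP /rowV0Pn [v /sub_kermxP vB v0].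
  set w := v^T.
  have Bw : B *m w = 0 by rewrite /w -Bsym -trmx_mul vB trmx0.
  set x := map_mx (fun z => 'Re z) w; set y := map_mx (fun z => 'Im z) w.
  have xr : x \is a realmx by apply: realmx_Re.
  have yr : y \is a realmx by apply: realmx_Im.
  have wE : w = x + 'i *: y by apply: cplx_dec.
  move: Bw; rewrite wE /B cplx_mul => Bw.
  have [e1 e2] : (I0 *m x - A *m y = 0) /\ (I0 *m y + A *m x = 0).
    by apply: cplx_eq0 Bw; rewrite ?realmxB ?realmxD' ?realmxM.
  move/eqP: e1; rewrite subr_eq0 => /eqP e1.
  move/eqP: e2; rewrite addr_eq0 => /eqP e2.
  have qsum : (x^T *m I0 *m x) 0 0 + (y^T *m I0 *m y) 0 0 = 0.
    rewrite -!mulmxA e1 e2 mulmxN [X in _ + X = _]mxE.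
    rewrite -[(y^T *m (A *m x)) 0 0]scal11 !trmx_mul trmxK hAsym mulmxA.
    by rewrite subrr.
  have /andP[/eqP qx /eqP qy] : ((x^T *m I0 *m x) 0 0 == 0) && ((y^T *m I0 *m y) 0 0 == 0).
    by rewrite -paddr_eq0 ?qf_ge0 // qsum.
  have Ix := qf_eq0 _ _ _ xr qx; have Iy := qf_eq0 _ _ _ yr qy.
  have x0 : x = 0 by apply: (I0z_kill _ _ A) => //; apply/eqP; rewrite -oppr_eq0 -e2 Iy.
  have y0 : y = 0 by apply: (I0z_kill _ _ A) => //; rewrite -e1 Ix.
  move/eqP: v0; apply; rewrite -[v]trmxK -/w wE x0 y0 scaler0 addr0 trmx0 //.
set Bi := invmx B.
set P := map_mx (fun z => 'Re z) Bi; set Q := map_mx (fun z => 'Im z) Bi.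
have MP : M = P by [].
have Pr : P \is a realmx by apply: realmx_Re.
have Qr : Q \is a realmx by apply: realmx_Im.
have BiE : Bi = P + 'i *: Q by apply: cplx_dec.
have onr : (1%:M : 'M[C]_n.+1) \is a realmx by apply: mxOver_scalar; rewrite ?rpred0 ?rpred1.
have zr : (0 : 'M[C]_n.+1) \is a realmx by apply: mxOver0; rewrite rpred0.
have [E1 E2] : I0 *m P - A *m Q = 1%:M /\ I0 *m Q + A *m P = 0.
  have := mulmxV Bu; rewrite -/Bi BiE /B cplx_mul => h.
  by apply: cplx_eq; rewrite ?realmxB ?realmxD' ?realmxM // h scaler0 addr0.
have E3 : P *m A + Q *m I0 = 0.
  have := mulVmx Bu; rewrite -/Bi BiE /B cplx_mul => h.
  have h' : P *m I0 - Q *m A - 1%:M + 'i *: (P *m A + Q *m I0) = 0.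
    by rewrite addrAC h subrr.
  have [_ ->] // := cplx_eq0 _ _ _ (P *m I0 - Q *m A - 1%:M) (P *m A + Q *m I0)
    (realmxB _ _ _ _ _ (realmxB _ _ _ _ _ (realmxM _ _ _ _ _ _ Pr I0r) (realmxM _ _ _ _ _ _ Qr hAreal)) onr)
    (realmxD' _ _ _ _ _ (realmxM _ _ _ _ _ _ Pr hAreal) (realmxM _ _ _ _ _ _ Qr I0r)) h'.
have Pa : P *m a = 0.
  have cI : col ord0 I0 = 0.
    apply/matrixP => i j; rewrite /I0 !mxE.
    by case: (i == ord0) => //=; rewrite ?andbF // andbT.
  move/eqP: E3; rewrite addr_eq0 => /eqP E3.
  by rewrite /a colE mulmxA E3 mulNmx -mulmxA -colE cI mulmx0 oppr0.
have Pxx : forall x : 'cV[C]_n.+1, x \is a realmx ->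
    [/\ x = I0 *m (P *m x) - A *m (Q *m x), A *m (P *m x) = - (I0 *m (Q *m x)) &
      (x^T *m P *m x) 0 0 = ((P *m x)^T *m I0 *m (P *m x)) 0 0 + ((Q *m x)^T *m I0 *m (Q *m x)) 0 0].
  move=> x xr.
  have xE : x = I0 *m (P *m x) - A *m (Q *m x) by rewrite !mulmxA -mulmxBl E1 mul1mx.
  have e2 : A *m (P *m x) = - (I0 *m (Q *m x)).
    by apply/eqP; rewrite -addr_eq0 addrC !mulmxA -mulmxDl E2 mul0mx.
  split => //.
  rewrite -mulmxA; move: (P *m x) (Q *m x) xE e2 => p q xE e2.
  rewrite [in X in (X *m _) 0 0]xE linearB /= !trmx_mul Imx0_tr hAsym mulmxBl -!mulmxA e2.
  by rewrite mulmxN opprK [LHS]mxE.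
have kerR : forall v : 'cV[C]_(n.+1), v \is a realmx ->
    (M *m v = 0 <-> exists2 c : C, c \is Num.real & v = c *: a).
  move=> v vr; rewrite MP; split.
    move=> pv; have [vE e2 _] := Pxx v vr; move: vE e2; rewrite pv !mulmx0 sub0r.
    move=> vE /esym/eqP; rewrite oppr_eq0 => /eqP Iq.
    exists (- (Q *m v) ord0 0).
      by rewrite rpredN (mxOverP (realmxM _ _ _ _ _ _ Qr vr)).
    by rewrite {1}vE (I0zA _ _ A _ Iq) scaleNr.
  by case=> c cr ->; rewrite -scalemxAr Pa scaler0.
split => //.
- by move=> x xr; have [_ _ ->] := Pxx x xr; rewrite addr_ge0 // qf_ge0 // realmxM.
have Mr : M \is a realmx by [].
have kerC : forall w : 'cV[C]_(n.+1), M *m w = 0 -> exists c : C, w = c *: a.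
  move=> w Mw.
  set x := map_mx (fun z => 'Re z) w; set y := map_mx (fun z => 'Im z) w.
  have xr : x \is a realmx by apply: realmx_Re.
  have yr : y \is a realmx by apply: realmx_Im.
  have wE : w = x + 'i *: y by apply: cplx_dec.
  move: Mw; rewrite wE mulmxDr -scalemxAr => Mw.
  have [/(kerR _ xr) [cx _ ->] /(kerR _ yr) [cy _ ->]] := cplx_eq0 _ _ _ _ _ (realmxM _ _ _ _ _ _ Mr xr) (realmxM _ _ _ _ _ _ Mr yr) Mw.
  by exists (cx + 'i * cy); rewrite scalerA scalerDl.
have Ma : M *m a = 0 by rewrite MP Pa.
have Msym : M^T = M by rewrite /M /Remx map_trmx trmx_inv Bsym.
have Mherm : M \is hermsymmx.
  apply: realsym_hermsym => //; apply/is_hermitianmxP.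
  by rewrite expr0 scale1r map_mx_id // Msym.
have /orthomx_spectralP ME := hermitian_normalmx Mherm.
move: ME; set S := spectralmx M; set D := spectral_diag M => ME.
have Su : S \in unitmx by apply: spectral_unit.
have SM : forall w : 'cV[C]_n.+1, S *m (M *m w) = diag_mx D *m (S *m w).
  by move=> w; rewrite {1}ME !mulmxA mulmxV // mul1mx.
have diagE : forall (u : 'cV[C]_n.+1) i, (diag_mx D *m u) i 0 = D 0 i * u i 0.
  by move=> u i; rewrite mul_diag_mx mxE.
set u := S *m a.
have u0 : u != 0.
  apply: contra_neq a0 => h; rewrite -(mulKmx Su a); move: h; rewrite /u => ->; by rewrite mulmx0.
have [i0 ui0] : exists i, u i 0 != 0.
  apply/existsP; apply: contraR u0 => /existsPn h; apply/eqP/matrixP => i j.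
  by rewrite ord1 [RHS]mxE; apply/eqP; move: (h i); rewrite negbK.
have Di0 : D 0 i0 = 0.
  have := SM a; rewrite Ma mulmx0 -/u => /esym/matrixP/(_ i0 0).
  by rewrite diagE [(0 : 'cV[C]_n.+1) i0 0]mxE => /eqP; rewrite mulf_eq0 (negPf ui0) orbF => /eqP.
have dk : forall k, D 0 k = 0 -> exists c : C, (delta_mx k 0 : 'cV[C]_n.+1) = c *: u.
  move=> k Dk.
  have Mw : M *m (invmx S *m (delta_mx k 0 : 'cV[C]_n.+1)) = 0.
    rewrite ME -!mulmxA mulKVmx //.
    have -> : diag_mx D *m delta_mx k 0 = 0 :> 'cV[C]_n.+1.
      apply/matrixP => i j; rewrite mul_diag_mx !mxE.
      by case: (i =P k) => [->|]; rewrite ?Dk ?mul0r ?mulr0 //= ?andbF ?mulr0.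
    by rewrite mulmx0.
  have [c wc] := kerC _ Mw.
  by exists c; rewrite /u scalemxAr -wc mulKVmx.
have Dj : forall j, j != i0 -> D 0 j != 0.
  move=> j ji; apply/negP => /eqP Dj0.
  have [ci hi] := dk i0 Di0; have [cj hj] := dk j Dj0.
  have := congr1 (fun X : 'cV_n.+1 => X j 0) hi; rewrite !mxE eqxx (negPf ji) /= => e1.
  have := congr1 (fun X : 'cV_n.+1 => X j 0) hj; rewrite !mxE !eqxx /= => e2.
  have := congr1 (fun X : 'cV_n.+1 => X i0 0) hi; rewrite !mxE !eqxx /= => e3.
  move: (\sum_(j0 < n.+1) S j j0 * a j0 0) e1 e2 => s e1 e2.
  have s0 : s != 0 by apply/eqP => s0; move: e2; rewrite s0 mulr0 => /eqP; rewrite oner_eq0.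
  have ci0 : ci = 0 by move/esym/eqP: e1; rewrite mulf_eq0 (negPf s0) orbF => /eqP.
  by move: e3; rewrite ci0 mul0r => /eqP; rewrite oner_eq0.
rewrite ME char_poly_conj // char_poly_trig ?diag_mx_is_trig //.
rewrite (bigD1 i0) //= mupMl.
  by rewrite mxE eqxx mulr1n Di0 -[X in mup _ X]expr1 mup_XsubCX eqxx.
rewrite /root horner_prod; apply/prodf_neq0 => j ji.
by rewrite hornerXsubC mxE eqxx mulr1n sub0r oppr_eq0 Dj.
Qed.
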